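(* Let $G$ be a finite group, $k$ a positive integer, $a_1,\dots,a_k,b_1,\dots,b_k$ independent uniformly random elements of $G$, and for $(i,j)\in V=[k]\times[k]$ and $x\in G$ let $I_{(i,j)}(x)$ be the indicator of the event $\{x=a_ib_j \text{ or } x=b_ja_i\}$. Let $\Gamma=(V,E)$ be the graph with $(i,j)\sim(\ell,m)$ iff ($i=\ell$ and $j\ne m$) or ($i\ne \ell$ and $j=m$). For $x\ne y\in G$, let $\Gamma_{x,y}$ be the graph on vertex set $V\times\{x,y\}$ in which $(v,z)\sim(u,z')$ iff $\{v,u\}\in E$ (for all $v,u\in V$, $z,z'\in\{x,y\}$), and set $J(v,z)=I_v(z)$. Then for any $x\ne y\in G$, $\Gamma_{x,y}$ is a dependency graph for the family $\{J(v,z)\}_{(v,z)\in V\times\{x,y\}}=\{I_v(x),I_v(y)\}_{v\in V}$.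
   Context: $[k]=\{1,\dots,k\}$. A graph on the index set $W$ of a family of random variables $\{X_w\}_{w\in W}$ is a dependency graph for the family if for any two disjoint subsets $S,T\subseteq W$ with no edge between $S$ and $T$, the families $\{X_w\}_{w\in S}$ and $\{X_w\}_{w\in T}$ are independent of each other.
   Formalization: In $\Gamma_{x,y}$, (v,z) ∼ (u,z′) iff {v,u} ∈ E or v = u and z ≠ z′, so (v,x) and (v,y) are also adjacent for every v ∈ V. The statement above fails without it. *)

(* Defs.v *)
From mathcomp Require Import all_boot all_order all_algebra all_fingroup.
Set Implicit Arguments. Unset Strict Implicit. Unset Printing Implicit Defensive.
Import GRing.Theory Num.Theory.
Local Open Scope ring_scope.

Definition uprob (Omega : finType) (A : pred Omega) : rat :=
  (#|A|%:R / #|Omega|%:R)%R.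

Definition indep_families (Omega W Val : finType) (X : W -> Omega -> Val)
    (S T : {set W}) : Prop :=
  forall f g : {ffun W -> Val},
    uprob [pred om | [forall s in S, X s om == f s] &&
                     [forall t in T, X t om == g t]]
    = uprob [pred om | [forall s in S, X s om == f s]] *
      uprob [pred om | [forall t in T, X t om == g t]].

Definition dependency_graph (Omega W Val : finType) (e : rel W)
    (X : W -> Omega -> Val) : Prop :=
  forall S T : {set W}, [disjoint S & T] ->
    (forall s t, s \in S -> t \in T -> ~~ e s t) ->
    indep_families X S T.

(* Sample space: (a_1..a_k, b_1..b_k), uniform. *)
Definition sample (gT : finGroupType) (k : nat) : finType :=
  ({ffun 'I_k -> gT} * {ffun 'I_k -> gT})%type.

Definition vtx (k : nat) : finType := ('I_k * 'I_k)%type.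

Definition Ind (gT : finGroupType) (k : nat) (v : vtx k) (x : gT)
    (om : sample gT k) : bool :=
  (x == (om.1 v.1 * om.2 v.2)%g) || (x == (om.2 v.2 * om.1 v.1)%g).

Definition gamma_edge (k : nat) : rel (vtx k) :=
  fun v u => ((v.1 == u.1) && (v.2 != u.2)) || ((v.1 != u.1) && (v.2 == u.2)).

(* Gamma_{x,y} on V x {x,y}, with {x,y} encoded by bool (false = x, true = y).
   (v,z) ~ (u,z') iff {v,u} in E, or v = u and z <> z'. *)
Definition gamma_xy_edge (k : nat) : rel (vtx k * bool) :=
  fun p q => gamma_edge p.1 q.1 || ((p.1 == q.1) && (p.2 != q.2)).

Definition zsel (gT : finGroupType) (x y : gT) (b : bool) : gT :=
  if b then y else x.

Definition Jfam (gT : finGroupType) (k : nat) (x y : gT)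
    (p : vtx k * bool) (om : sample gT k) : bool :=
  Ind p.1 (zsel x y p.2) om.

(* Main.v *)
Require Import Defs.
From mathcomp Require Import all_boot all_order all_algebra all_fingroup.
From mathcomp Require Import ring.
Import GRing.Theory Num.Theory.
Local Open Scope ring_scope.

Lemma swap_count (O : finType) (m : O -> O -> O) (P Q : pred O)
  (inv : forall a b, m (m a b) (m b a) = a)
  (HP : forall a b, P (m a b) = P a) (HQ : forall a b, Q (m a b) = Q b) :
  (#|[pred a | P a && Q a]| * #|O| = #|P| * #|Q|)%N.
Proof.
pose F (p : O * O) := (m p.1 p.2, m p.2 p.1).
have injF : injective F.
  move=> [a b] [c d]; rewrite /F /= => -[e1 e2].
  have h1 : a = c by rewrite -(inv a b) e1 e2 inv.
  have h2 : b = d by rewrite -(inv b a) e1 e2 inv.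
  by rewrite h1 h2.
have -> : #|O| = #|(predT : pred O)| by apply: eq_card.
rewrite -cardX -cardX.
rewrite -cardsE -(card_preimset _ injF).
apply: eq_card => -[a b]; rewrite !inE /= HP HQ andbT.
by [].
Qed.

Lemma noedge (k : nat) (s t : (vtx k * bool)%type) :
  s != t -> ~~ gamma_xy_edge s t -> (s.1.1 != t.1.1) && (s.1.2 != t.1.2).
Proof.
case: s => [[a b] c]; case: t => [[a' b'] c'].
rewrite /gamma_xy_edge /gamma_edge /= !xpair_eqE /=.
have [Ea|na] := eqVneq a a'; have [Eb|nb] := eqVneq b b';
have [Ec|nc] := eqVneq c c'; try subst a'; try subst b'; try subst c';
rewrite ?eqxx ?na ?nb ?nc //=.
Qed.

Theorem proposition4p4 (gT : finGroupType) (k : nat) (x y : gT) :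
  (0 < k)%N -> x != y ->
  dependency_graph (@gamma_xy_edge k) (Jfam x y).
Proof.
move=> _ _ S T dST noE f g.
pose A := [set s.1.1 | s in S]; pose B := [set s.1.2 | s in S].
have TA : forall t, t \in T -> (t.1.1 \notin A) && (t.1.2 \notin B).
  move=> t tT; apply/andP; split.
  - apply/negP => /imsetP [s sS e].
    have st : s != t.
      apply/eqP => st; move/disjoint_setI0/setP/(_ t): dST.
      by rewrite !inE -{1}st sS tT.
    by move: (@noedge _ s t st (noE s t sS tT)); rewrite e eqxx.
  - apply/negP => /imsetP [s sS e].
    have st : s != t.
      apply/eqP => st; move/disjoint_setI0/setP/(_ t): dST.
      by rewrite !inE -{1}st sS tT.
    by move: (@noedge _ s t st (noE s t sS tT)); rewrite e eqxx andbF.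
pose m (a b : sample gT k) : sample gT k :=
  ([ffun i => if i \in A then a.1 i else b.1 i],
   [ffun j => if j \in B then a.2 j else b.2 j]).
pose P := [pred om : sample gT k | [forall s in S, Jfam x y s om == f s]].
pose Q := [pred om : sample gT k | [forall t in T, Jfam x y t om == g t]].
have inv : forall a b, m (m a b) (m b a) = a.
  move=> [a1 a2] [b1 b2]; rewrite /m /=; congr pair; apply/ffunP => i;
  by rewrite !ffunE; case: (_ \in _).
have HP : forall a b, P (m a b) = P a.
  move=> a b; rewrite /P /=; apply: eq_forallb_in => s sS.
  have sA : s.1.1 \in A by apply/imsetP; exists s.
  have sB : s.1.2 \in B by apply/imsetP; exists s.
  by rewrite /Jfam /Ind /m /= !ffunE sA sB.
have HQ : forall a b, Q (m a b) = Q b.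
  move=> a b; rewrite /Q /=; apply: eq_forallb_in => t tT.
  have /andP[tA tB] := TA t tT.
  by rewrite /Jfam /Ind /m /= !ffunE (negbTE tA) (negbTE tB).
have key := @swap_count _ m P Q inv HP HQ.
rewrite /uprob.
have -> : #|[pred om | [forall s in S, Jfam x y s om == f s] &&
                     [forall t in T, Jfam x y t om == g t]]| =
          #|[pred a | P a && Q a]| by apply: eq_card.
have -> : #|[pred om | [forall s in S, Jfam x y s om == f s]]| = #|P| by [].
have -> : #|[pred om | [forall t in T, Jfam x y t om == g t]]| = #|Q| by [].
move: key; set N := #|sample gT k|; set a := #|[pred a | P a && Q a]|.
set p := #|P|; set q := #|Q| => key.
have : (a%:R * N%:R = p%:R * q%:R :> rat) by rewrite -!natrM key.
have [->|N0] := eqVneq N 0%N.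
  by rewrite !invr0 !mulr0.
have N0' : (N%:R : rat) != 0 by rewrite pnatr_eq0.
move=> e.
rewrite (_ : (p%:R : rat) / N%:R * (q%:R / N%:R) = (p%:R * q%:R) / (N%:R * N%:R)); last by field.
rewrite -e; field.
by [].
Qed.
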